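(* Let $f$ be a Boolean function with $s={\rm psize}(f)\ge1$ that is equivalent to a depth-$d$ decision tree. Then the zero-depth of $T_f$ is at most $d\ln s+1$.
   Context: Every Boolean function has a unique representation as a sum over $\mathbb{F}_2$ of distinct monomials; ${\rm psize}(f)$ is the number of non-constant monomials in it. A decision tree computes a Boolean function by following from the root, at an internal node labeled $x_i$, the 0-child (left) if $x_i=0$ and the 1-child (right) if $x_i=1$, outputting the 0/1 leaf label; its depth is the maximum number of edges on a root-to-leaf path. For a Boolean function $f$, the decision tree $T_f$ is defined recursively: if $f$ is constant $\xi$, $T_f$ is a leaf labeled $\xi$; otherwise the root is labeled by $x_i$ where $i$ is the smallest index among those minimizing ${\rm psize}(f_{|x_i\gets0})$, its left subtree is $T_{f_{|x_i\gets0}}$ and its right subtree is $T_{f_{|x_i\gets1}}$. The zero-depth of a decision tree is the maximum, over root-to-leaf paths, of the number of edges on the path that go to a left (0-) child. *)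

(* Defs.v *)
From Stdlib Require Import Reals.
From mathcomp Require Import all_boot.
Set Implicit Arguments. Unset Strict Implicit. Unset Printing Implicit Defensive.

Definition input n := {ffun 'I_n -> bool}.
Definition bfun n := input n -> bool.

Definition indic n (T : {set 'I_n}) : input n := [ffun i => i \in T].

(* Coefficient of the monomial prod_{i in S} x_i in the unique F_2-polynomial
   (algebraic normal form) of f: the Moebius transform
   c_f(S) = XOR_{T subset S} f(1_T). *)
Definition anf_coef n (f : bfun n) (S : {set 'I_n}) : bool :=
  \big[xorb/false]_(T : {set 'I_n} | T \subset S) f (indic T).

Definition anf n (f : bfun n) : {set {set 'I_n}} := [set S | anf_coef f S].

Definition psize n (f : bfun n) : nat := #|[set S in anf f | S != set0]|.

(* Restriction f_{|x_i <- b} (still a function of n variables, ignoring x_i). *)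
Definition restr n (f : bfun n) (i : 'I_n) (b : bool) : bfun n :=
  fun x => f [ffun j => if j == i then b else x j].

Inductive dtree (n : nat) : Type :=
| Leaf : bool -> dtree n
| Node : 'I_n -> dtree n -> dtree n -> dtree n.

Fixpoint dt_eval n (t : dtree n) (x : input n) : bool :=
  match t with
  | Leaf b => b
  | Node i l r => if x i then dt_eval r x else dt_eval l x
  end.

Fixpoint depth n (t : dtree n) : nat :=
  match t with
  | Leaf _ => 0
  | Node _ l r => (maxn (depth l) (depth r)).+1
  end.

Fixpoint zero_depth n (t : dtree n) : nat :=
  match t with
  | Leaf _ => 0
  | Node _ l r => maxn (zero_depth l).+1 (zero_depth r)
  end.

Definition is_const n (f : bfun n) (xi : bool) : Prop := forall x, f x = xi.

Definition chosen_var n (f : bfun n) (i : 'I_n) : Prop :=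
  (forall j : 'I_n, psize (restr f i false) <= psize (restr f j false)) /\
  (forall j : 'I_n, j < i -> psize (restr f i false) < psize (restr f j false)).

(* Graph of the recursive definition of T_f:  Tf f t  <->  t = T_f. *)
Inductive Tf n : bfun n -> dtree n -> Prop :=
| Tf_leaf (f : bfun n) (xi : bool) :
    is_const f xi -> Tf f (Leaf n xi)
| Tf_node (f : bfun n) (i : 'I_n) (t0 t1 : dtree n) :
    (forall xi, ~ is_const f xi) -> chosen_var f i ->
    Tf (restr f i false) t0 -> Tf (restr f i true) t1 ->
    Tf f (Node i t0 t1).

(* Main.v *)
Require Import Defs.
From Stdlib Require Import Reals Lra ZArith.
From mathcomp Require Import all_boot zify.
Set Implicit Arguments. Unset Strict Implicit. Unset Printing Implicit Defensive.

Lemma xor_addb (I : Type) (r : seq I) (P : pred I) (F : I -> bool) :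
  \big[xorb/false]_(i <- r | P i) F i = \big[addb/false]_(i <- r | P i) F i.
Proof.
apply: (big_ind2 (fun a b => a = b)) => // x1 x2 y1 y2 -> ->.
by case: x2; case: y2.
Qed.

Section Tog.
Variable T : finType.
Definition tog (j : T) (S : {set T}) := if j \in S then S :\ j else j |: S.

Lemma tog_in j S : (j \in tog j S) = ~~ (j \in S).
Proof. by rewrite /tog; case: ifP => H; rewrite !inE eqxx ?H. Qed.

Lemma togK j : involutive (tog j).
Proof.
move=> S; rewrite [tog j (tog j S)]/tog tog_in /tog.
by case: (boolP (j \in S)) => H /=; [rewrite setD1K | rewrite setU1K].
Qed.

Lemma tog_inj j : injective (tog j).
Proof. exact: (inv_inj (togK j)). Qed.

Lemma xor_tog j (P : pred {set T}) (F : {set T} -> bool) :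
  (forall S, P (tog j S) = P S) -> (forall S, F (tog j S) = F S) ->
  \big[addb/false]_(S | P S) F S = false.
Proof.
move=> HP HF; rewrite (bigID (fun S : {set T} => j \in S)) /=.
rewrite [X in addb X _](reindex_inj (@tog_inj j)) /=.
rewrite (eq_big (fun S => P S && (j \notin S)) (fun S => F S)) ?addbb //.
  by move=> S; rewrite HP tog_in.

Qed.
End Tog.

Lemma tog_neq (T : finType) (i j : T) (S : {set T}) : j != i -> (j \in tog i S) = (j \in S).
Proof. by move=> H; rewrite /tog; case: ifP => _; rewrite !inE (negbTE H). Qed.

Lemma tog_sub (T : finType) (j : T) (S U : {set T}) : j \in S -> (tog j U \subset S) = (U \subset S).
Proof.
move=> jS; rewrite /tog; case: ifP => jU.
  apply/idP/idP => H; last exact: subset_trans (subD1set _ _) H.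
  by rewrite -(setD1K jU) subUset sub1set jS H.
by rewrite subUset sub1set jS.
Qed.

Lemma sub_notin (T : finType) (i : T) (S U : {set T}) : i \notin S ->
  (U \subset i |: S) && (i \notin U) = (U \subset S).
Proof.
move=> iS; apply/idP/idP.
  move=> /andP[/subsetP H Hi]; apply/subsetP => x xU.
  have := H x xU; rewrite !inE; case/orP => // /eqP ex.
  by move: Hi; rewrite -ex xU.
move=> /subsetP H; rewrite (contra (H i)) ?andbT //.
by apply/subsetP => x /H xS; rewrite !inE xS orbT.
Qed.

Section Anf.
Variable n : nat.
Implicit Types (f g : bfun n) (S T U P : {set 'I_n}).

Lemma coefE f S : anf_coef f S = \big[addb/false]_(T : {set 'I_n} | T \subset S) f (indic T).
Proof. by rewrite /anf_coef xor_addb. Qed.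

Lemma coef_ext f g : (forall T, f (indic T) = g (indic T)) -> forall S, anf_coef f S = anf_coef g S.
Proof. by move=> H S; rewrite !coefE; apply: eq_bigr => T _; rewrite H. Qed.

Lemma const_coef f xi S : is_const f xi -> S != set0 -> anf_coef f S = false.
Proof.
move=> Hc /set0Pn [j jS]; rewrite coefE.
apply: (xor_tog (j := j)) => U; first exact: tog_sub.
by rewrite !Hc.
Qed.

Definition restrP f P : bfun n := fun x => f [ffun j => if j \in P then false else x j].

Lemma restrP_indic f P T : restrP f P (indic T) = f (indic (T :\: P)).
Proof.
rewrite /restrP; congr f; apply/ffunP => j; rewrite !ffunE !inE.
by case: (j \in P).
Qed.

Lemma restrP_coef f P S :
  anf_coef (restrP f P) S = (S :&: P == set0) && anf_coef f S.
Proof.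
rewrite !coefE; case: eqP => [HSP | /eqP /set0Pn [j]].
  apply: eq_bigr => T TS; rewrite restrP_indic; congr (f (indic _)).
  apply/setP => x; rewrite !inE; case xT: (x \in T); rewrite ?andbF ?andbT //.
  apply/negP => xP; have: x \in S :&: P by rewrite inE (subsetP TS x xT).
  by rewrite HSP inE.
rewrite inE => /andP [jS jP].
apply: (xor_tog (j := j)) => U; first exact: tog_sub.
rewrite !restrP_indic; congr (f (indic _)).
apply/setP => x; rewrite !inE; case: (eqVneq x j) => [->|xj]; first by rewrite jP.
by rewrite tog_neq.
Qed.

Lemma restr0_coef f i S :
  anf_coef (restr f i false) S = (i \notin S) && anf_coef f S.
Proof.
have -> : (i \notin S) = (S :&: [set i] == set0).
  apply/idP/idP => [iS | /eqP H].
    apply/eqP/setP => x; rewrite !inE; case: (eqVneq x i) => [->|];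
      rewrite ?andbF ?andbT //; exact: negbTE.
  apply/negP => iS; have : i \in S :&: [set i] by rewrite !inE iS eqxx.
  by rewrite H inE.
rewrite -restrP_coef; apply: coef_ext => T.
by rewrite /restr /restrP; congr f; apply/ffunP => j; rewrite !ffunE inE.
Qed.

Lemma restr1_in f i S : i \in S -> anf_coef (restr f i true) S = false.
Proof.
move=> iS; rewrite coefE; apply: (xor_tog (j := i)) => U; first exact: tog_sub.
rewrite /restr; congr f; apply/ffunP => j; rewrite !ffunE.
by case: eqP => // /eqP ji; rewrite tog_neq.
Qed.

Lemma restr1_split f i S : i \notin S ->
  anf_coef f (i |: S) = anf_coef f S (+) anf_coef (restr f i true) S.
Proof.
move=> iS; rewrite !coefE (bigID (fun T : {set 'I_n} => i \in T)) /= addbC.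
congr addb.
  by apply: eq_bigl => T; rewrite sub_notin.
rewrite (reindex_inj (@tog_inj _ i)) /=.
apply: eq_big => T; rewrite tog_in.
  rewrite /tog; case: ifP => iT /=; rewrite ?andbF ?andbT.
    by apply/esym/negP => /subsetP H; move: iS; rewrite (H i iT).
  by rewrite subUset sub1set setU11 /= -(sub_notin _ iS) iT andbT.
rewrite /tog; case: ifP => iT; rewrite ?andbF //= => _.
rewrite /restr; congr f; apply/ffunP => j; rewrite !ffunE !inE.
by case: eqP.
Qed.

End Anf.

Lemma sub_tog (T : finType) (j : T) (S U : {set T}) : j \notin U -> (U \subset tog j S) = (U \subset S).
Proof.
move=> jU; apply/subsetP/subsetP => H x xU; have xj : x != j.
- by apply/eqP => ej; move: jU; rewrite -ej xU.
- by move: (H x xU); rewrite tog_neq.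
- by apply/eqP => ej; move: jU; rewrite -ej xU.
- by rewrite tog_neq // H.
Qed.

Section Anf2.
Variable n : nat.

Lemma moebius (g : {set 'I_n} -> bool) (S : {set 'I_n}) :
  \big[addb/false]_(T : {set 'I_n} | T \subset S)
     \big[addb/false]_(U : {set 'I_n} | U \subset T) g U = g S.
Proof.
rewrite (exchange_big_dep (fun U : {set 'I_n} => U \subset S)) /=; last first.
  by move=> T U TS UT; exact: subset_trans UT TS.
rewrite (bigD1 S) //= (big_pred1 S); last first.
  by move=> T; rewrite /= eqEsubset.
rewrite big1 ?addbF // => U /andP [US UneS].
have : U \proper S by rewrite properEneq UneS.
case/properP => _ [j jS jU].
apply: (xor_tog (j := j)) => // T.
by rewrite tog_sub // sub_tog.
Qed.

Definition mon (f : bfun n) := [set S in anf f | S != set0].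
Lemma psizeE f : psize f = #|mon f|. Proof. by []. Qed.
Lemma in_mon f S : (S \in mon f) = anf_coef f S && (S != set0).
Proof. by rewrite !inE. Qed.

Lemma indic_supp (x : input n) : x = indic [set j | x j].
Proof. by apply/ffunP => j; rewrite ffunE inE. Qed.

Lemma anf_inv (f : bfun n) T :
  f (indic T) = \big[addb/false]_(U : {set 'I_n} | U \subset T) anf_coef f U.
Proof.
rewrite -(moebius (fun U => f (indic U))); apply: eq_bigr => U _.
by rewrite coefE.
Qed.

Lemma psize0_const (f : bfun n) : psize f = 0 -> is_const f (anf_coef f set0).
Proof.
move=> /cards0_eq H x; rewrite (indic_supp x) anf_inv (bigD1 set0) ?sub0set //=.
rewrite big1 ?addbF // => U /andP [_ U0].
apply/negbTE/negP => cU.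
have : U \in mon f by rewrite in_mon cU U0.
by rewrite /mon H inE.
Qed.

Lemma const_psize0 (f : bfun n) xi : is_const f xi -> psize f = 0.
Proof.
move=> Hc; apply/eqP; rewrite cards_eq0; apply/eqP/setP => S.
rewrite in_mon inE; case: (eqVneq S set0) => [_|SN]; first by rewrite andbF.
by rewrite (const_coef Hc SN).
Qed.

End Anf2.

Section Counting.
Variable n : nat.
Implicit Types (f : bfun n) (i : 'I_n).

Lemma mon_restr0 f i : mon (restr f i false) = mon f :\: [set S : {set 'I_n} | i \in S].
Proof.
by apply/setP => S; rewrite !inE restr0_coef -!andbA; congr andb; rewrite andbC.
Qed.

Definition mcount f i := #|mon f :&: [set S : {set 'I_n} | i \in S]|.

Lemma psize_restr0 f i : psize (restr f i false) = psize f - mcount f i.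
Proof. by rewrite !psizeE mon_restr0 -(cardsID [set S : {set 'I_n} | i \in S] (mon f)) addKn. Qed.

Lemma mon_restr1 f i S : S \in mon (restr f i true) ->
  i \notin S /\ ((S \in mon f) || (i |: S \in mon f)).
Proof.
rewrite !in_mon => /andP [c SN].
have iS : i \notin S by apply/negP => iS; rewrite restr1_in in c.
split=> //; move: c; rewrite SN andbT.
have iSN : i |: S != set0 by apply/set0Pn; exists i; rewrite setU11.
rewrite iSN andbT -[anf_coef _ S](addKb (anf_coef f S)) -restr1_split //.
by case: (anf_coef f S); case: (anf_coef f (i |: S)).
Qed.

Lemma psize_restr1 f i : psize (restr f i true) <= psize f.
Proof.
rewrite !psizeE; apply: leq_trans (leq_imset_card (fun S => S :\ i) (mon f)).
apply: subset_leq_card; apply/subsetP => S /mon_restr1 [iS /orP [H|H]].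
  apply/imsetP; exists S => //; apply/setP => x; rewrite !inE.
  by case: (eqVneq x i) => [->|]; rewrite ?(negbTE iS).
apply/imsetP; exists (i |: S) => //; by rewrite setU1K.
Qed.

Definition vars f := \bigcup_(S in mon f) S.

Lemma in_vars f S x : S \in mon f -> x \in S -> x \in vars f.
Proof. by move=> HS xS; apply/bigcupP; exists S. Qed.

Lemma vars_restr f i b : vars (restr f i b) \subset vars f :\ i.
Proof.
apply/subsetP => x /bigcupP [S HS xS].
case: b HS => HS.
  have [iS /orP [H|H]] := mon_restr1 HS.
    rewrite !inE (in_vars H xS) andbT; apply/eqP => exi.
    by move: iS; rewrite -exi xS.
  rewrite !inE (in_vars H) ?andbT; last by rewrite inE xS orbT.
  by apply/eqP => exi; move: iS; rewrite -exi xS.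
move: HS; rewrite mon_restr0 !inE => /andP [iS HS].
rewrite (@in_vars _ S) ?andbT; last by [].
  by apply/eqP => exi; move: iS; rewrite -exi xS.
by rewrite in_mon.
Qed.

Lemma notin_vars f i : i \notin vars f -> psize (restr f i false) = psize f.
Proof.
move=> iv; rewrite psize_restr0; suff -> : mcount f i = 0 by rewrite subn0.
apply/eqP; rewrite cards_eq0; apply/eqP/setP => S; rewrite !inE.
apply/negP => /andP [HS iS]; move: iv; rewrite (@in_vars _ S) // in_mon. exact: HS.
Qed.

Lemma vars_lt f i b : i \in vars f -> #|vars (restr f i b)| < #|vars f|.
Proof.
move=> iv; rewrite (cardsD1 i (vars f)) iv add1n ltnS.
exact: subset_leq_card (vars_restr f i b).
Qed.

End Counting.

Lemma card_sum (T : finType) (P S : {set T}) : #|S :&: P| = \sum_(i in P) (i \in S).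
Proof.
rewrite -sum1_card (eq_bigl (fun i => (i \in P) && (i \in S))); last first.
  by move=> i; rewrite !inE andbC.
rewrite big_mkcondr /=; apply: eq_bigr => i _; by case: (i \in S).
Qed.

Section Trees.
Variable n : nat.
Implicit Types (f : bfun n) (i : 'I_n) (t : dtree n).

Fixpoint rdt t i b : dtree n :=
  match t with
  | Leaf c => Leaf n c
  | Node j l r => if j == i then (if b then rdt r i b else rdt l i b)
                  else Node j (rdt l i b) (rdt r i b)
  end.

Lemma rdt_eval t i b x :
  dt_eval (rdt t i b) x = dt_eval t [ffun j => if j == i then b else x j].
Proof.
elim: t => [c|j l IHl r IHr] //=; rewrite ffunE.
case: eqP => _ /=; last by rewrite IHl IHr.
by case: b IHl IHr => IHl IHr; rewrite ?IHl ?IHr.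
Qed.

Lemma rdt_depth t i b : depth (rdt t i b) <= depth t.
Proof.
elim: t => [c|j l IHl r IHr] //=.
case: eqP => _ /=; last by rewrite ltnS geq_max !leq_max IHl IHr orbT.
case: b IHl IHr => IHl IHr.
  by apply: leq_trans IHr _; apply: leqW; apply: leq_maxr.
by apply: leq_trans IHl _; apply: leqW; apply: leq_maxl.
Qed.

Lemma restr_dt t d f i b : depth t <= d -> (forall x, dt_eval t x = f x) ->
  depth (rdt t i b) <= d /\ forall x, dt_eval (rdt t i b) x = restr f i b x.
Proof.
move=> Hd He; split; first exact: leq_trans (rdt_depth t i b) Hd.
by move=> x; rewrite rdt_eval He.
Qed.

Fixpoint zp t : {set 'I_n} :=
  match t with Leaf _ => set0 | Node j l _ => j |: zp l end.
Fixpoint zl t : bool :=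
  match t with Leaf c => c | Node _ l _ => zl l end.

Lemma zp_eval t (x : input n) : (forall j, j \in zp t -> x j = false) -> dt_eval t x = zl t.
Proof.
elim: t => [c|j l IHl r IHr] //= H.
rewrite H ?setU11 // IHl // => k kl; apply: H; by rewrite inE kl orbT.
Qed.

Lemma zp_card t : #|zp t| <= depth t.
Proof.
elim: t => [c|j l IHl r IHr] /=; first by rewrite cards0.
rewrite cardsU1 -add1n; apply: leq_add; first by case: (j \notin zp l).
exact: leq_trans IHl (leq_maxl _ _).
Qed.

Lemma hit f t : (forall x, dt_eval t x = f x) ->
  forall S, S \in mon f -> S :&: zp t != set0.
Proof.
move=> He S; rewrite in_mon => /andP [cS SN].
have Hc : is_const (restrP f (zp t)) (zl t).
  move=> x; rewrite /restrP -He; apply: zp_eval => j jP.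
  by rewrite ffunE jP.
have := const_coef Hc SN; rewrite restrP_coef cS andbT.
by move=> ->.
Qed.

Lemma good_var f t d : depth t <= d -> (forall x, dt_eval t x = f x) ->
  0 < psize f -> exists i, d * psize (restr f i false) <= (d - 1) * psize f.
Proof.
move=> Hd He Hs.
set P := zp t.
have Hsum : psize f <= \sum_(i in P) mcount f i.
  rewrite psizeE -sum1_card.
  apply: (@leq_trans (\sum_(S in mon f) #|S :&: P|)).
    apply: leq_sum => S HS; rewrite card_gt0; exact: hit He S HS.
  under eq_bigr => S _ do rewrite card_sum.
  rewrite exchange_big /=; apply: leq_sum => i _.
  rewrite /mcount setIC card_sum; apply: eq_leq; apply: eq_bigr => S _.
  by rewrite inE.
have [S0 HS0] : exists S0, S0 \in mon f.
  by move: Hs; rewrite psizeE card_gt0 => /set0Pn.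
have [j0 jP] : exists j0, j0 \in P.
  by have := hit He HS0; case/set0Pn => j; rewrite inE => /andP [_ jP]; exists j.
case: (@arg_maxnP _ j0 (mem P) (mcount f) jP) => i iP Hmax.
exists i.
have Hm : psize f <= d * mcount f i.
  apply: leq_trans Hsum _.
  apply: (@leq_trans (\sum_(k in P) mcount f i)); first exact: leq_sum.
  rewrite sum_nat_const; apply: leq_mul => //.
  exact: leq_trans (zp_card t) Hd.
rewrite psize_restr0 mulnBr mulnBl mul1n.
exact: leq_sub2l.
Qed.

End Trees.

Section Main.
Variable n : nat.
Implicit Types (f : bfun n) (i : 'I_n) (t : dtree n).

Lemma choose_var f (j0 : 'I_n) : exists i, chosen_var f i.
Proof.
set F := fun i : 'I_n => psize (restr f i false) * n + i.
case: (@arg_minnP _ j0 predT F) => // i _ Hmin.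
exists i; split.
- move=> j; have := Hmin j isT; rewrite /F => H.
  have := ltn_ord i; have := ltn_ord j.
  move: H; set a := psize _; set b := psize _; move=> H Hj Hi.
  nia.
- move=> j ji; have := Hmin j isT; rewrite /F => H.
  have := ltn_ord i; have := ltn_ord j.
  move: H; set a := psize _; set b := psize _; move=> H Hj Hi.
  nia.
Qed.

Lemma main_ind d : 0 < d -> forall m f, #|vars f| = m ->
  (exists t, depth t <= d /\ forall x, dt_eval t x = f x) ->
  forall k, psize f * (d - 1) ^ k < d ^ k ->
  exists T, Tf f T /\ zero_depth T <= k.
Proof.
move=> Hd m; elim/ltn_ind: m => m IH f Hm [t [Htd Hte]] k Hk.
case: (posnP (psize f)) => Hs.
  exists (Leaf n (anf_coef f set0)); split => //.
  by apply: Tf_leaf; apply: psize0_const.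
have [j0 Hj0] := good_var Htd Hte Hs.
have [i [Hi1 Hi2]] := choose_var f j0.
have Hlt : psize (restr f i false) < psize f.
  have := Hi1 j0; move: Hj0 Hs Hd.
  set p0 := psize (restr f i false); set pj := psize (restr f j0 false).
  set s := psize f; nia.
have Hiv : i \in vars f.
  by apply/negPn/negP => Hn; rewrite (@notin_vars _ f i Hn) ltnn in Hlt.
have Hnc : forall xi, ~ is_const f xi.
  by move=> xi /const_psize0 H; rewrite H in Hs.
case: k Hk => [|k] Hk.
  by move: Hk; rewrite !expn0 muln1 ltnS leqn0 => /eqP H; rewrite H in Hs.
have [T0 [H0 Z0]] : exists T, Tf (restr f i false) T /\ zero_depth T <= k.
  apply: (IH #|vars (restr f i false)|) => //.
  - by rewrite -Hm; apply: vars_lt.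
  - by exists (rdt t i false); apply: restr_dt.
  have := Hi1 j0; move: Hj0 Hk Hd; rewrite !expnS.
  set p0 := psize (restr f i false); set pj := psize (restr f j0 false).
  set s := psize f; set A := (d - 1) ^ k; set B := d ^ k => Hj0' Hk' Hd' Hp.
  rewrite -(ltn_pmul2l Hd') mulnA; apply: leq_ltn_trans Hk'.
  rewrite mulnCA mulnA; apply: leq_mul => //.
  apply: leq_trans Hj0'; by rewrite leq_mul2l Hp orbT.
have [T1 [H1 Z1]] : exists T, Tf (restr f i true) T /\ zero_depth T <= k.+1.
  apply: (IH #|vars (restr f i true)|) => //.
  - by rewrite -Hm; apply: vars_lt.
  - by exists (rdt t i true); apply: restr_dt.
  apply: leq_ltn_trans Hk; apply: leq_mul => //; exact: psize_restr1.
exists (Node i T0 T1); split; first by apply: Tf_node.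
by rewrite /= geq_max Z1 ltnS Z0.
Qed.

End Main.

Lemma expn_pow m k : expn m k = Nat.pow m k.
Proof. by elim: k => // k IH; rewrite expnS IH mulnE. Qed.

Section RealPart.
Local Open Scope R_scope.
Lemma real_k (d s : nat) : (0 < d)%N -> (0 < s)%N ->
  exists k, (s * (d - 1) ^ k < d ^ k)%N /\
    Rle (INR k) (Rplus (Rmult (INR d) (ln (INR s))) (INR 1)).
Proof.
move=> Hd Hs.
have HS : 1 <= INR s by apply: (le_INR 1); apply/leP.
have HD : 1 <= INR d by apply: (le_INR 1); apply/leP.
have lnS : 0 <= ln (INR s).
  case: (Rle_lt_or_eq_dec _ _ HS) => [H|<-]; last by rewrite ln_1; lra.
  rewrite -ln_1; left; apply: ln_increasing => //; lra.
set x := INR d * ln (INR s).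
have Hx : 0 <= x by apply: Rmult_le_pos => //; lra.
have [Hup1 Hup2] := archimed x.
have Hz : (0 <= up x)%Z by apply: le_IZR; lra.
set k := Z.to_nat (up x).
have Hk : INR k = IZR (up x) by rewrite INR_IZR_INZ Z2Nat.id.
exists k; split; last by rewrite Hk INR_1; lra.
have Kpos : 0 < INR k by rewrite Hk; lra.
case: (eqVneq d 1%N) => [-> | Hd1].
  have kpos : (0 < k)%N by apply/ltP; apply: INR_lt; rewrite INR_0.
  by rewrite subnn exp1n exp0n // muln0.
have HD2 : 2 <= INR d by apply: (le_INR 2); apply/leP; rewrite ltn_neqAle eq_sym Hd1 Hd.
have Hd1R : INR (d - 1) = INR d - 1 by rewrite minus_INR //; apply/leP.
apply/ltP; apply: INR_lt.
rewrite !expn_pow mulnE mult_INR !pow_INR Hd1R.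
apply: ln_lt_inv.
- apply: Rmult_lt_0_compat; first lra. apply: pow_lt; lra.
- apply: pow_lt; lra.
rewrite ln_mult; last (apply: pow_lt; lra); last lra.
rewrite !ln_pow; try lra.
set D := INR d in HD2 HD *; set K := INR k in Kpos Hk *.
have Hl : ln (D - 1) - ln D < - / D.
  have H1 : (D - 1) / D = 1 + - / D by field; lra.
  have H2 : 1 + - / D < exp (- / D).
    apply: exp_ineq1; apply: Ropp_neq_0_compat; apply: Rinv_neq_0_compat; lra.
  have H3 : ln ((D - 1) / D) < - / D.
    rewrite -{1}(ln_exp (- / D)); apply: ln_increasing; last by rewrite H1.
    apply: Rdiv_lt_0_compat; lra.
  move: H3; rewrite /Rdiv ln_mult ?ln_Rinv; try lra.
  apply: Rinv_0_lt_compat; lra.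
have HKD : ln (INR s) < K * / D.
  apply: (Rmult_lt_reg_l D); first lra.
  rewrite (Rmult_comm K) -Rmult_assoc Rinv_r; last lra.
  rewrite Rmult_1_l Hk; exact: Hup1.
have : K * (ln (D - 1) - ln D) <= K * - / D.
  apply: Rmult_le_compat_l; lra.
lra.
Qed.

End RealPart.

Theorem mainTheorem20 (n : nat) (f : bfun n) (d : nat) :
  1 <= psize f ->
  (exists t : dtree n, depth t = d /\ forall x, dt_eval t x = f x) ->
  exists T : dtree n, Tf f T /\
    Rle (INR (zero_depth T)) (Rplus (Rmult (INR d) (ln (INR (psize f)))) (INR 1)).
Proof.
move=> Hs [t [Htd Hte]].
have Hd : 0 < d.
  move: Htd Hte; case: t => [c|j l r] /=; last by move=> <-.
  move=> <- Hte; have Hc : is_const f c by move=> x; rewrite -Hte.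
  by move: Hs; rewrite (const_psize0 Hc).
have [k [Hk Hkr]] := real_k Hd Hs.
have Ht : exists t0 : dtree n, depth t0 <= d /\ forall x, dt_eval t0 x = f x.
  by exists t; rewrite Htd leqnn.
have [T [HT Hz]] := main_ind Hd (erefl #|vars f|) Ht Hk.
exists T; split => //.
apply: Rle_trans Hkr; apply: le_INR; exact/leP.
Qed.
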